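(* Let $G$ be a finite simple graph with edge weight function $w$ and vertex weight function $w_1$, let $\theta$ be a real number, and let $u$ be a $(\theta,w,w_1)$-special vertex of $G$. Then the degree of $u$ is at least two.
   Context: An edge weight function $w$ assigns a nonzero complex number to each edge; a vertex weight function $w_1$ assigns a real number (possibly $0$) to each vertex; subgraphs carry restricted weights; $G\setminus u$ deletes $u$ and its incident edges. For $A\subseteq E(G)$, $w(A)=\prod_{e\in A}w(e)$. $\mu_w(G,x)=\sum_{M}(-1)^{|M|}|w(M)|^2x^{n-2|M|}$ over all matchings $M$ (including empty). $\eta_{(w,w_1)}(G,x)=\sum_{S\subseteq V(G)}(-1)^{|V(G)\setminus S|}\big(\prod_{y\in V(G)\setminus S}w_1(y)\big)\mu_w(G[S],x)$ with $G[S]$ the induced subgraph; $\mu_w,\eta_{(w,w_1)}$ of the empty graph equal $1$. $\mathrm{mult}(\theta,H)$ is the multiplicity of $\theta$ as a root of $\eta_{(w,w_1)}(H,x)$ ($0$ if not a root). A vertex $v$ of $H$ is $(\theta,w,w_1)$-essential if $\mathrm{mult}(\theta,H\setminus v)=\mathrm{mult}(\theta,H)-1$; $v$ is $(\theta,w,w_1)$-special if it is not essential but is adjacent to some essential vertex. *)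

(* Defs.v *)
(* Complex numbers are R[i] = complex R for a real closed
   field R (the paper's case is R = the reals). *)
From HB Require Import structures.
From mathcomp Require Import all_boot all_order all_algebra.
From mathcomp Require Import complex.
Set Implicit Arguments. Unset Strict Implicit. Unset Printing Implicit Defensive.
Import Order.TTheory GRing.Theory Num.Theory.
Local Open Scope ring_scope.
Local Open Scope complex_scope.

Section EtaPoly.
Variables (R : rcfType) (T : finType).
Definition simple_graph (g : rel T) := symmetric g /\ irreflexive g.

Definition is_edge (g : rel T) (e : {set T}) :=
  [exists x, exists y, g x y && (e == [set x; y])].

Definition matching_in (g : rel T) (S : {set T}) (M : {set {set T}}) :=
  [forall e in M, is_edge g e && (e \subset S)] &&
  [forall e1 in M, forall e2 in M, (e1 != e2) ==> [disjoint e1 & e2]].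

Definition mu_poly (g : rel T) (w : {set T} -> R[i]) (S : {set T}) : {poly R[i]} :=
  \sum_(M : {set {set T}} | matching_in g S M)
     ((-1) ^+ #|M| * `|\prod_(e in M) w e| ^+ 2)%:P * 'X^(#|S| - 2 * #|M|).

Definition eta_poly (g : rel T) (w : {set T} -> R[i]) (w1 : T -> R)
    (S : {set T}) : {poly R[i]} :=
  \sum_(A : {set T} | A \subset S)
     ((-1) ^+ #|S :\: A| * (\prod_(y in S :\: A) real_complex _ (w1 y)))%:P
       * mu_poly g w A.

Definition mult (g : rel T) w w1 (theta : R) (S : {set T}) : nat :=
  mup (real_complex _ theta) (eta_poly g w w1 S).

Definition essential g w w1 theta (S : {set T}) (v : T) :=
  (v \in S) && (mult g w w1 theta (S :\ v) + 1 == mult g w w1 theta S)%N.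

Definition special g w w1 theta (S : {set T}) (u : T) :=
  (u \in S) && ~~ essential g w w1 theta S u &&
  [exists v in S, g u v && essential g w w1 theta S v].

Definition degree (g : rel T) (u : T) : nat := #|[set y | g u y]|.
End EtaPoly.

(* Main.v *)
Require Import Defs.
From HB Require Import structures.
From mathcomp Require Import all_boot all_order all_algebra.
From mathcomp Require Import complex ring zify.
Set Implicit Arguments. Unset Strict Implicit. Unset Printing Implicit Defensive.
Import Order.TTheory GRing.Theory Num.Theory.
Local Open Scope ring_scope.

Section Mu.
Variables (R : rcfType) (T : finType) (g : rel T) (w : {set T} -> R[i]).
Hypothesis gsym : symmetric g.
Hypothesis girr : irreflexive g.

Lemma disjP (A B : {set T}) :
  reflect (forall x, x \in A -> x \in B -> False) [disjoint A & B].
Proof.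
rewrite disjoints_subset; apply: (iffP subsetP) => H x xA.
  by move=> xB; have := H x xA; rewrite inE xB.
by rewrite inE; apply/negP; exact: H x xA.
Qed.

Lemma edge_pair u v : is_edge g [set u; v] -> g u v.
Proof.
case/existsP=> a /existsP[b /andP[gab /eqP E]].
have ha : a \in [set u; v] by rewrite E !inE eqxx.
have hb : b \in [set u; v] by rewrite E !inE eqxx orbT.
move: ha hb gab; rewrite !inE => /orP[]/eqP-> /orP[]/eqP->;
  rewrite ?girr // => h. all: by rewrite gsym.
Qed.

Lemma edge_of u v : g u v -> is_edge g [set u; v].
Proof. by move=> h; apply/existsP; exists u; apply/existsP; exists v; rewrite h eqxx. Qed.

Lemma edge_card e : is_edge g e -> #|e| = 2%N.
Proof.
case/existsP=> a /existsP[b /andP[gab /eqP ->]].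
rewrite cards2; case: eqP => // eab; by rewrite eab girr in gab.
Qed.

Lemma matching_card S M : matching_in g S M -> (2 * #|M| <= #|S|)%N.
Proof.
move=> /andP[/forall_inP He /forall_inP Hd].
have tri : trivIset M.
  apply/trivIsetP => e1 e2 H1 H2 ne.
  by have /forall_inP/(_ e2 H2) := Hd e1 H1; rewrite ne.
have cov : cover M \subset S.
  by apply/bigcupsP => e /He /andP[_ ->].
have eqc : #|cover M| = (\sum_(A in M) #|A|)%N.
  by apply/eqP; rewrite (leq_card_cover M).2 tri.
have : (\sum_(A in M) #|A| = \sum_(A in M) 2)%N.
  by apply: eq_bigr => e /He /andP[/edge_card -> _].
rewrite sum_nat_const => H; rewrite mulnC -H -eqc.
exact: subset_leq_card.
Qed.


Definition Fm (A : {set T}) (M : {set {set T}}) : {poly R[i]} :=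
  ((-1) ^+ #|M| * `|\prod_(e in M) w e| ^+ 2)%:P * 'X^(#|A| - 2 * #|M|).

Lemma muE A : mu_poly g w A = \sum_(M | matching_in g A M) Fm A M.
Proof. by []. Qed.

Lemma mu_uncov (A : {set T}) (u : T) : u \in A ->
  \sum_(M | matching_in g A M && ~~ [exists e in M, u \in e]) Fm A M
  = 'X * mu_poly g w (A :\ u).
Proof.
move=> uA.
have HP : forall M : {set {set T}}, (matching_in g A M && ~~ [exists e in M, u \in e])
                    = matching_in g (A :\ u) M.
  move=> M; apply/idP/idP.
  - case/andP=> /andP[/forall_inP He Hd] /exists_inP Hn.
    rewrite /matching_in Hd andbT; apply/forall_inP => e eM.
    have /andP[-> sub] := He e eM; rewrite subsetD1 sub /=.
    by apply/negP => ue; apply: Hn; exists e.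
  - case/andP=> /forall_inP He Hd; rewrite /matching_in Hd andbT.
    apply/andP; split.
      apply/forall_inP => e eM; have /andP[-> ] := He e eM.
      by rewrite subsetD1 => /andP[-> _].
    apply/exists_inP => -[e eM ue]; have /andP[_] := He e eM.
    by rewrite subsetD1 ue andbF.
rewrite muE mulr_sumr; apply: eq_big => // M; rewrite HP => hM.
rewrite /Fm (cardsD1 u A) uA add1n.
have h := matching_card hM.
by rewrite subSn // (exprS 'X) mulrCA.
Qed.

Lemma mu_cov_v (A : {set T}) (u v : T) : u \in A -> v \in A -> v != u -> g u v ->
  \sum_(M | matching_in g A M && ([set u; v] \in M)) Fm A M
  = - ((`|w [set u; v]| ^+ 2)%:P * mu_poly g w (A :\ u :\ v)).
Proof.
move=> uA vA vu guv; set e := [set u; v].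
have ue : u \in e by rewrite !inE eqxx.
have ve : v \in e by rewrite !inE eqxx orbT.
rewrite muE mulr_sumr -sumrN.
rewrite (reindex_onto (fun M' => e |: M') (fun M => M :\ e)) /=; last first.
  by move=> M /andP[_ eM]; rewrite setD1K.
have HP : forall M' : {set {set T}}, (matching_in g A (e |: M') && (e \in e |: M'))
           && ((e |: M') :\ e == M') = matching_in g (A :\ u :\ v) M'.
  move=> M'; rewrite setU11 andbT; apply/idP/idP.
  - case/andP => /andP[/forall_inP He /forall_inP Hd] /eqP Edel.
    have eM' : e \notin M' by rewrite -Edel setD11.
    apply/andP; split.
      apply/forall_inP => e' e'M.
      have /andP[-> sA] := He e' (setU1r e e'M).
      have ne : e' != e by apply: contraNneq eM' => <-.
      have /forall_inP/(_ e' (setU1r e e'M)) := Hd e (setU11 e M').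
      rewrite eq_sym ne /= => /disjP dis.
      rewrite !subsetD1 sA /=; apply/andP; split; apply/negP => h;
        by apply: (dis _ _ h).
    apply/forall_inP => e1 e1M; apply/forall_inP => e2 e2M.
    by have /forall_inP/(_ e2 (setU1r e e2M)) := Hd e1 (setU1r e e1M).
  - case/andP => /forall_inP He /forall_inP Hd.
    have eM' : e \notin M'.
      apply/negP => /He /andP[_]; rewrite !subsetD1 => /andP[/andP[_]].
      by rewrite ue.
    have sub' : forall e', e' \in M' -> [/\ is_edge g e', e' \subset A,
                                          u \notin e' & v \notin e'].
      move=> e' /He /andP[-> ]; rewrite !subsetD1 => /andP[/andP[-> ->] ->].
      by [].
    have dis' : forall e', e' \in M' -> [disjoint e & e'].
      move=> e' /sub'[_ _ nu nv]; apply/disjP => x.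
      by rewrite !inE => /orP[]/eqP-> ; [move/negP: nu | move/negP: nv].
    rewrite setU1K // eqxx andbT; apply/andP; split.
      apply/forall_inP => e'; rewrite in_setU1 => /orP[/eqP-> | /sub'[-> -> _ _] //].
      by rewrite edge_of // subUset !sub1set uA vA.
    apply/forall_inP => e1; rewrite in_setU1 => /orP[/eqP-> | e1M];
      apply/forall_inP => e2; rewrite in_setU1 => /orP[/eqP-> | e2M].
    + by rewrite eqxx.
    + by rewrite dis' // implybT.
    + by rewrite disjoint_sym dis' // implybT.
    + exact: (forall_inP (Hd e1 e1M)).
apply: eq_big => // M'; rewrite HP => hM.
have eM' : e \notin M'.
  apply/negP => eM; move: hM => /andP[/forall_inP /(_ e eM) /andP[_]].
  by rewrite !subsetD1 ue andbF.
rewrite /Fm cardsU1 eM' big_setU1 //= normrM exprMn.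
rewrite (cardsD1 u A) uA (cardsD1 v (A :\ u)) !inE vu vA /= add1n add1n.
set n := #|A :\ u :\ v|; set k := #|M'|.
have -> : ((1 + n).+1 - 2 * k.+1 = n - 2 * k)%N.
  by rewrite add1n mulnS -[n.+2]/(2 + n)%N subnDl.
rewrite (exprS (-1)) !polyCM polyCN polyC1.
move: (`|w e|%:P) (`|\prod_(i in M') w i|%:P) (((-1) ^+ k)%:P) ('X^(n - 2 * k)).
by move=> a b c d; ring.
Qed.

Lemma mu_rec (A : {set T}) (u : T) : u \in A ->
  mu_poly g w A = 'X * mu_poly g w (A :\ u)
    - \sum_(v in A :\ u | g u v) (`|w [set u; v]| ^+ 2)%:P * mu_poly g w (A :\ u :\ v).
Proof.
move=> uA; rewrite muE (bigID (fun M : {set {set T}} => [exists e in M, u \in e])) /=.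
rewrite mu_uncov // addrC; congr (_ + _).
rewrite -sumrN.
set p := fun M : {set {set T}} => odflt u [pick v | [set u; v] \in M].
have pP : forall M, matching_in g A M -> [exists e in M, u \in e] ->
    [set u; p M] \in M /\ g u (p M).
  move=> M /andP[/forall_inP He _] /exists_inP[e eM ue].
  have ee := He e eM; move: ee => /andP[ee sA].
  have [v [E guv]] : exists v, e = [set u; v] /\ g u v.
    move: (ee) => /existsP[a /existsP[b /andP[gab /eqP E]]].
    move: ue; rewrite E !inE => /orP[]/eqP->.
      by exists b.
    by exists a; rewrite setUC gsym.
  rewrite /p; case: pickP => [v' Hv' | /(_ v)]; last by rewrite -E eM.
  by split => //; apply: edge_pair; have /andP[] := He _ Hv'.
rewrite (partition_big p (fun v => (v \in A :\ u) && g u v)); last first.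
  move=> M /andP[hM hc]; have [eM guv] := pP M hM hc.
  rewrite guv andbT !inE.
  have /andP[_] := (forall_inP (andP hM).1) _ eM.
  rewrite subUset !sub1set => /andP[_ ->]; rewrite andbT.
  by apply: contraTneq guv => ->; rewrite girr.
apply: eq_bigr => v /andP[]; rewrite !inE => /andP[vu vA] guv.
rewrite -mu_cov_v //; apply: eq_bigl => M.
apply/idP/idP.
  case/andP=> /andP[hM hc] /eqP pv; rewrite hM /=.
  by have [] := pP M hM hc; rewrite pv.
case/andP=> hM eM; rewrite hM /=.
have hc : [exists e in M, u \in e] by apply/exists_inP; exists [set u; v] => //; rewrite !inE eqxx.
rewrite hc /=; have [eM' gp] := pP M hM hc.
case: (eqVneq [set u; p M] [set u; v]) => [E | ne].
  have : p M \in [set u; v] by rewrite -E !inE eqxx orbT.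
  rewrite !inE => /orP[/eqP pu | //]; by rewrite pu girr in gp.
have := (forall_inP (forall_inP (andP hM).2 _ eM') _ eM); rewrite ne /=.
by move/disjP/(_ u); rewrite !inE eqxx => /(_ isT isT).
Qed.
End Mu.

Section Eta.
Variables (R : rcfType) (T : finType) (g : rel T) (w : {set T} -> R[i]) (w1 : T -> R).
Hypothesis gsym : symmetric g.
Hypothesis girr : irreflexive g.

Definition kk (S A : {set T}) : {poly R[i]} :=
  ((-1) ^+ #|S :\: A| * (\prod_(y in S :\: A) real_complex R (w1 y)))%:P.

Lemma etaE (S : {set T}) : eta_poly g w w1 S = \sum_(A : {set T} | A \subset S) kk S A * mu_poly g w A.
Proof. by []. Qed.

Lemma sum_in (S : {set T}) v (f : {set T} -> {poly R[i]}) : v \in S ->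
  \sum_(A : {set T} | (A \subset S) && (v \in A)) kk S A * f (A :\ v)
  = \sum_(B : {set T} | B \subset S :\ v) kk (S :\ v) B * f B.
Proof.
move=> vS.
rewrite (reindex_onto (fun B => v |: B) (fun A => A :\ v)) /=; last first.
  by move=> A /andP[_ vA]; rewrite setD1K.
have HP : forall B : {set T}, ((v |: B \subset S) && (v \in v |: B)) && ((v |: B) :\ v == B)
   = (B \subset S :\ v).
  move=> B; rewrite setU11 andbT; apply/idP/idP.
    case/andP=> sub /eqP E.
    have vB : v \notin B by rewrite -E setD11.
    rewrite subsetD1 vB andbT; apply: subset_trans sub; exact: subsetUr.
  rewrite subsetD1 => /andP[sB vB].
  by rewrite setU1K // eqxx andbT subUset sub1set vS.
apply: eq_big => // B; rewrite HP subsetD1 => /andP[sB vB].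
rewrite setU1K //; congr (_ * _); rewrite /kk.
have -> // : S :\: (v |: B) = (S :\ v) :\: B.
by apply/setP => x; rewrite !inE negb_or; case: (x == v); case: (x \in B).
Qed.

Lemma sum_out (S : {set T}) v (f : {set T} -> {poly R[i]}) : v \in S ->
  \sum_(A : {set T} | (A \subset S) && (v \notin A)) kk S A * f A
  = - (real_complex R (w1 v))%:P * \sum_(B : {set T} | B \subset S :\ v) kk (S :\ v) B * f B.
Proof.
move=> vS; rewrite mulr_sumr; apply: eq_big => [A|A]; first by rewrite subsetD1.
move=> /andP[sA vA]; rewrite mulrA; congr (_ * _).
have E : S :\: A = v |: ((S :\ v) :\: A).
  apply/setP => x; rewrite !inE; case: (eqVneq x v) => [->|] //=.
  by rewrite vA vS.
have nv : v \notin (S :\ v) :\: A by rewrite !inE eqxx /= ?andbF.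
rewrite /kk E cardsU1 nv big_setU1 //= add1n exprS !polyCM polyCN polyC1.
move: ((-1) ^+ #|(S :\ v) :\: A|)%:P (real_complex R (w1 v))%:P
      (\prod_(i in (S :\ v) :\: A) real_complex R (w1 i))%:P => a b c.
ring.
Qed.

Lemma eta_rec (S : {set T}) u : u \in S ->
  eta_poly g w w1 S = ('X - (real_complex R (w1 u))%:P) * eta_poly g w w1 (S :\ u)
    - \sum_(v in S :\ u | g u v) (`|w [set u; v]| ^+ 2)%:P * eta_poly g w w1 (S :\ u :\ v).
Proof.
move=> uS; rewrite etaE (bigID (fun A : {set T} => u \in A)) /=.
set f := fun B : {set T} => 'X * mu_poly g w B
    - \sum_(v in B | g u v) (`|w [set u; v]| ^+ 2)%:P * mu_poly g w (B :\ v).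
have -> : \sum_(A : {set T} | (A \subset S) && (u \in A)) kk S A * mu_poly g w A
        = \sum_(A : {set T} | (A \subset S) && (u \in A)) kk S A * f (A :\ u).
  apply: eq_bigr => A /andP[_ uA]; rewrite (mu_rec w gsym girr uA) /f.
  by congr (_ * (_ - _)); apply: eq_bigl => v; rewrite !inE andbA.
rewrite sum_in // sum_out // -!etaE.
set S' := S :\ u.
have key : \sum_(B : {set T} | B \subset S') kk S' B *
    (\sum_(v in B | g u v) (`|w [set u; v]| ^+ 2)%:P * mu_poly g w (B :\ v))
  = \sum_(v in S' | g u v) (`|w [set u; v]| ^+ 2)%:P * eta_poly g w w1 (S' :\ v).
  under eq_bigr do rewrite mulr_sumr.
  rewrite (exchange_big_dep (fun v => (v \in S') && g u v)) /=; last first.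
    by move=> B v sB /andP[vB ->]; rewrite andbT (subsetP sB).
  apply: eq_bigr => v /andP[vS' guv].
  rewrite etaE -sum_in // mulr_sumr; apply: eq_big => [B|B _].
    by rewrite guv andbT.
  by rewrite mulrCA.
rewrite (eq_bigr (fun B => 'X * (kk S' B * mu_poly g w B) - kk S' B *
   \sum_(v in B | g u v) (`|w [set u; v]| ^+ 2)%:P * mu_poly g w (B :\ v))); last first.
  by move=> B _; rewrite /f /= mulrBr mulrCA.
rewrite sumrB -mulr_sumr -etaE key.
move: (eta_poly g w w1 S') => p. move: (\sum_(v in S' | g u v) _) => q.
ring.
Qed.
End Eta.

Section Props.
Variables (R : rcfType) (T : finType) (g : rel T) (w : {set T} -> R[i]) (w1 : T -> R).
Hypothesis gsym : symmetric g.
Hypothesis girr : irreflexive g.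
Local Notation E := (eta_poly g w w1).

Lemma mu0 : mu_poly g w set0 = 1.
Proof.
rewrite muE (big_pred1 set0) => [|M] /=.
  by rewrite /Fm !cards0 big_set0 normr1 expr1n !mulr1 expr0.
apply/idP/idP.
  case/andP=> /forall_inP He _; apply/eqP/setP => e; rewrite inE.
  apply/negP => eM; have /andP[ee] := He e eM; rewrite subset0 => /eqP ee0.
  by move: (edge_card girr ee); rewrite ee0 cards0.
move/eqP->; apply/andP; split; apply/forall_inP => e; by rewrite inE.
Qed.

Lemma eta0 : E set0 = 1.
Proof.
rewrite etaE (big_pred1 set0) => [|A] /=; last by rewrite subset0.
by rewrite mu0 /kk setDv cards0 big_set0 mulr1 expr0 mulr1.
Qed.

Lemma size_sum_le (I : finType) (P : pred I) (F : I -> {poly R[i]}) N :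
  (forall i, P i -> (size (F i) <= N)%N) -> (size (\sum_(i | P i) F i)%R <= N)%N.
Proof.
move=> H; apply: (big_ind (fun p : {poly R[i]} => size p <= N)%N) => //.
  by rewrite size_poly0.
move=> x y hx hy; apply: leq_trans (size_polyD x y) _; by rewrite geq_max hx hy.
Qed.

Lemma eta_props (S : {set T}) :
  [/\ E S \is monic, size (E S) = #|S|.+1 & map_poly Num.conj (E S) = E S].
Proof.
have [n le] : exists n, (#|S| <= n)%N by exists #|S|.
elim: n S le => [|n IH] S le.
  move: le; rewrite leqn0 => /eqP/cards0_eq ->.
  by rewrite eta0 monic1 size_poly1 cards0 rmorph1.
case: (eqVneq S set0) => [->|]; first by rewrite eta0 monic1 size_poly1 cards0 rmorph1.
case/set0Pn => u uS.
have cS : #|S| = #|S :\ u|.+1 by rewrite (cardsD1 u S) uS.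
have [m1 s1 r1] : [/\ E (S :\ u) \is monic, size (E (S :\ u)) = #|S :\ u|.+1 & map_poly Num.conj (E (S :\ u)) = E (S :\ u)] by apply: IH; rewrite -ltnS -cS.
rewrite (eta_rec w w1 gsym girr uS).
set p := _ * E (S :\ u); set q := \sum_(v in _ | _) _.
have hle : (#|S :\ u| <= n)%N by rewrite -ltnS -cS.
have mp : p \is monic by rewrite monicMl // monicXsubC.
have sp : size p = #|S|.+1.
  by rewrite /p mulrC size_Mmonic ?monicXsubC ?monic_neq0 // s1 size_XsubC cS addn2.
have sq : (size q <= #|S|.-1)%N.
  apply: size_sum_le => v /andP[vS _].
  have cS' : #|S :\ u| = #|S :\ u :\ v|.+1 by rewrite (cardsD1 v (S :\ u)) vS.
  have [_ s2 _] := IH (S :\ u :\ v) ltac:(by apply: leq_trans hle; rewrite cS' leqnSn).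
  apply: leq_trans (size_polyMleq _ _) _.
  rewrite s2 cS cS' /=; have := size_polyC_leq1 (`|w [set u; v]| ^+ 2).
  by move: (size _) => k; case: k => [|[]].
have sqp : (size (- q) < size p)%N by rewrite size_polyN sp (leq_ltn_trans sq) // cS.
split.
- by rewrite monicE lead_coefDl // (monicP mp).
- by rewrite size_polyDl // sp.
- rewrite rmorphB /= rmorphM /= r1 rmorphB /= map_polyX map_polyC /=.
  have -> : Num.conj (real_complex R (w1 u)) = real_complex R (w1 u) := conjc_real _.
  congr (_ - _); rewrite rmorph_sum /=; apply: eq_bigr => v /andP[vS _].
  have cS' : #|S :\ u| = #|S :\ u :\ v|.+1 by rewrite (cardsD1 v (S :\ u)) vS.
  have [_ _ r2] := IH (S :\ u :\ v) ltac:(by apply: leq_trans hle; rewrite cS' leqnSn).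
  by rewrite rmorphM /= r2 map_polyC /= rmorphXn /= conj_normC.
Qed.
End Props.

Section Main.
Variables (R : rcfType) (T : finType) (g : rel T) (w : {set T} -> R[i]) (w1 : T -> R).
Variable theta : R.
Hypothesis gsym : symmetric g.
Hypothesis girr : irreflexive g.
Hypothesis hw : forall e : {set T}, is_edge g e -> w e != 0.
Local Notation E := (eta_poly g w w1).
Local Notation z := (real_complex R theta).
Local Notation Xz := ('X - z%:P).

Definition GoodE (p : {poly R[i]}) k := exists2 q : {poly R[i]}, p = Xz ^+ k * q & 0 < q.[z].
Definition Good (p : {poly R[i]}) := p = 0 \/ exists k, GoodE p k.

Lemma goodE_add p r a : GoodE p a -> Good r -> exists2 b, (b <= a)%N & GoodE (p + r) b.
Proof.
move=> [q -> hq] [-> | [b [q' -> hq']]]; first by exists a => //; exists q; rewrite ?addr0.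
case: (leqP a b) => hab.
  exists a => //; exists (q + Xz ^+ (b - a) * q').
    by rewrite mulrDr mulrA -exprD subnKC.
  rewrite hornerD hornerM horner_exp hornerXsubC subrr.
  case: (b - a)%N => [|k]; first by rewrite expr0 mul1r addr_gt0.
  by rewrite exprS !mul0r addr0.
exists b; first exact: ltnW.
exists (Xz ^+ (a - b) * q + q').
  by rewrite mulrDr mulrA -exprD subnKC // ltnW.
rewrite hornerD hornerM horner_exp hornerXsubC subrr.
have : (0 < a - b)%N by rewrite subn_gt0.
case: (a - b)%N => [//|k] _.
by rewrite exprS !mul0r add0r.
Qed.

Lemma good_add p r : Good p -> Good r -> Good (p + r).
Proof.
case=> [->|[a hp]] hr; first by rewrite add0r.
by right; have [b _ h] := goodE_add hp hr; exists b.
Qed.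

Lemma good_scale c p : 0 < c -> Good p -> Good (c%:P * p).
Proof.
move=> hc [->|[k [q -> hq]]]; first by left; rewrite mulr0.
right; exists k; exists (c%:P * q); first by rewrite mulrCA.
by rewrite hornerM hornerC mulr_gt0.
Qed.

Lemma good_sum (I : finType) (P : pred I) (F : I -> {poly R[i]}) :
  (forall i, P i -> Good (F i)) -> Good (\sum_(i | P i) F i).
Proof.
move=> H; apply: (big_ind Good) => //; first by left.
exact: good_add.
Qed.

Lemma goodE_mup p k : GoodE p k -> p != 0 /\ mup z p = k.
Proof.
move=> [q -> hq].
have nr : ~~ root q z by rewrite /root gt_eqF.
have q0 : q != 0 by apply: contraNneq nr => ->; rewrite root0.
split; first by rewrite mulf_neq0 // expf_neq0 // polyXsubC_eq0.
by rewrite mupMl // mup_XsubCX eqxx.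
Qed.

Lemma sq_good p : map_poly Num.conj p = p -> p != 0 -> GoodE (p * p) (2 * mup z p)%N.
Proof.
move=> rp p0; set m := mup z p.
have : Xz ^+ m %| p by rewrite -mup_geq.
case/dvdpP => q Ep.
have nr : ~~ root q z.
  apply/negP; rewrite root_factor_theorem => /(dvdp_mul (dvdpp (Xz ^+ m))).
  rewrite -exprSr mulrC -Ep -mup_geq // /m ltnn //.
have rq : map_poly Num.conj q = q.
  have Xm0 : Xz ^+ m != 0 by rewrite expf_neq0 // polyXsubC_eq0.
  have := congr1 (map_poly Num.conj) Ep; rewrite rp rmorphM /= rmorphXn /= rmorphB /=.
  rewrite map_polyX map_polyC /=.
  have -> : Num.conj (real_complex R theta) = real_complex R theta := conjc_real _.
  by move=> H; apply: (mulIf Xm0); rewrite -H -Ep.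
exists (q * q); first by rewrite Ep mul2n -addnn exprD mulrACA mulrC.
have hz : q.[z] = Num.conj q.[z].
  rewrite -horner_map /= rq.
  by have -> : Num.conj (real_complex R theta) = real_complex R theta := conjc_real _.
rewrite hornerM {2}hz mul_conjC_gt0.
by move: nr; rewrite /root.
Qed.

Definition D (S : {set T}) u := E (S :\ u) * (E S)^`() - E S * (E (S :\ u))^`().

Lemma D_rec (S : {set T}) u : u \in S ->
  D S u = E (S :\ u) * E (S :\ u)
        + \sum_(v in S :\ u | g u v) (`|w [set u; v]| ^+ 2)%:P * D (S :\ u) v.
Proof.
move=> uS; rewrite /D (eta_rec w w1 gsym girr uS).
set e1 := E (S :\ u).
set s := \sum_(v in S :\ u | g u v) _.
have ds : s^`() = \sum_(v in S :\ u | g u v) (`|w [set u; v]| ^+ 2)%:P * (E (S :\ u :\ v))^`().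
  by rewrite /s raddf_sum; apply: eq_bigr => v _; exact: deriv_mulC.
have hs : \sum_(v in S :\ u | g u v) (`|w [set u; v]| ^+ 2)%:P *
     (E (S :\ u :\ v) * e1^`() - e1 * (E (S :\ u :\ v))^`()) = s * e1^`() - e1 * s^`().
  rewrite ds mulr_suml mulr_sumr -sumrB; apply: eq_bigr => v _.
  by rewrite mulrBr mulrA mulrCA.
rewrite hs derivB derivM derivXsubC mul1r.
clearbody e1 s.
move: (e1^`()) (s^`()) ('X - _) => a b c.
ring.
Qed.

Lemma good_D n : forall (S : {set T}) u, (#|S| <= n)%N -> u \in S -> Good (D S u).
Proof.
elim: n => [|n IH] S u le uS.
  by move: le; rewrite leqn0 => /eqP/cards0_eq S0; rewrite S0 inE in uS.
have cS : #|S| = #|S :\ u|.+1 by rewrite (cardsD1 u S) uS.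
rewrite D_rec //; apply: good_add.
  have [m1 _ r1] := eta_props w w1 gsym girr (S :\ u).
  by right; eexists; apply: sq_good r1 (monic_neq0 m1).
apply: good_sum => v /andP[vS guv]; apply: good_scale.
  by rewrite exprn_gt0 // normr_gt0 hw // edge_of.
by apply: IH => //; rewrite -ltnS -cS.
Qed.

Lemma dvd_deriv (p : {poly R[i]}) n : Xz ^+ n.+1 %| p -> Xz ^+ n %| p^`().
Proof.
case/dvdpP => q ->; rewrite derivM deriv_exp derivXsubC mul1r /=.
apply: dvdp_add.
  by apply: dvdp_mull; rewrite exprS; exact: dvdp_mulIr.
by apply: dvdp_mull; rewrite -mulr_natr; exact: dvdp_mulIl.
Qed.

Lemma interlace (S : {set T}) u : u \in S -> (mup z (E S) <= (mup z (E (S :\ u))).+1)%N.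
Proof.
move=> uS; move Em: (mup z (E S)) => m; move Ek: (mup z (E (S :\ u))) => k.
rewrite leqNgt; apply/negP => H.
have [mS _ rS] := eta_props w w1 gsym girr S.
have [m1 _ r1] := eta_props w w1 gsym girr (S :\ u).
have ES0 := monic_neq0 mS; have E10 := monic_neq0 m1.
have hsq := sq_good r1 E10.
have hrest : Good (\sum_(v in S :\ u | g u v) (`|w [set u; v]| ^+ 2)%:P * D (S :\ u) v).
  apply: good_sum => v /andP[vS guv]; apply: good_scale.
    by rewrite exprn_gt0 // normr_gt0 hw // edge_of.
  exact: (good_D (leqnn _)).
have [b hb hD] := goodE_add hsq hrest.
rewrite -D_rec // in hD.
have [D0 mD] := goodE_mup hD.
have dS : Xz ^+ m %| E S by rewrite -mup_geq // Em.
have d1 : Xz ^+ k %| E (S :\ u) by rewrite -mup_geq // Ek.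
move: H dS; case: m Em => [//|m'] Em H dS.
have : Xz ^+ (k + m') %| D S u.
  apply: dvdp_sub.
    by rewrite exprD; apply: dvdp_mul d1 (dvd_deriv dS).
  move: d1; case: k Ek H hb => [|k'] Ek H hb d1.
    rewrite add0n; apply: dvdp_mulr; apply: dvdp_trans dS.
    by rewrite exprS; exact: dvdp_mulIr.
  have -> : (k'.+1 + m' = m'.+1 + k')%N by rewrite addSn addnC.
  by rewrite exprD; apply: dvdp_mul dS (dvd_deriv d1).
rewrite -mup_geq // mD => hle.
rewrite Ek in hb.
clear -hle hb H; lia.
Qed.

Lemma main u : special g w w1 theta [set: T] u -> (2 <= degree g u)%N.
Proof.
case/andP => /andP[_ nes] /exists_inP[v _ /andP[guv esv]].
rewrite leqNgt; apply/negP => hdeg.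
have Nu : forall y, g u y -> y = v.
  move: hdeg; rewrite ltnS => /card_le1_eqP H y guy.
  by have := H y v; rewrite !inE guy guv => /(_ isT isT).
have vu : v != u by apply: contraTneq guv => ->; rewrite girr.
have uV : u \in [set: T] by rewrite inE.
have uVv : u \in [set: T] :\ v by rewrite !inE eq_sym vu.
have Rec1 : E [set: T] = ('X - (real_complex R (w1 u))%:P) * E ([set: T] :\ u)
     - (`|w [set u; v]| ^+ 2)%:P * E ([set: T] :\ u :\ v).
  rewrite {1}(eta_rec w w1 gsym girr uV) (big_pred1 v) // => y /=.
  rewrite !inE andbT; apply/idP/idP.
    by case/andP => _ /Nu ->.
  by move/eqP->; rewrite vu guv.
have Rec2 : E ([set: T] :\ v) = ('X - (real_complex R (w1 u))%:P) * E ([set: T] :\ u :\ v).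
  rewrite (eta_rec w w1 gsym girr uVv) big_pred0 ?subr0.
    by have -> : [set: T] :\ v :\ u = [set: T] :\ u :\ v by apply/setP => y; rewrite !inE andbCA.
  move=> y /=; rewrite !inE; case guy: (g u y); last by rewrite andbF.
  by rewrite (Nu y guy) eqxx /= ?andbF.
have [mV _ _] := eta_props w w1 gsym girr [set: T].
have [m1 _ _] := eta_props w w1 gsym girr ([set: T] :\ u).
have [m2 _ _] := eta_props w w1 gsym girr ([set: T] :\ u :\ v).
have X0 : ('X - (real_complex R (w1 u))%:P) != 0 by rewrite polyXsubC_eq0.
have c0 : (`|w [set u; v]| ^+ 2) != 0.
  by rewrite expf_neq0 // normr_eq0 hw // edge_of.
move Em: (mup z (E [set: T])) => m.
move Ek: (mup z (E ([set: T] :\ u))) => k.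
move Ej: (mup z (E ([set: T] :\ u :\ v))) => j.
have Ej' : mup z (E ([set: T] :\ u :\ v)) = j by exact: Ej.
have Ek' : mup z (E ([set: T] :\ u)) = k by exact: Ek.
have Em' : mup z (E [set: T]) = m by exact: Em.
have hj : (j + 1 <= m)%N.
  move: esv; rewrite /essential /mult inE /= Em => /eqP <-.
  rewrite Rec2 mupM ?monic_neq0 ?monicXsubC // Ej' leq_add2r; exact: leq_addl.
have hk : (k + 1 != m)%N by move: nes; rewrite /essential /mult uV /= Ek Em.
have hi := interlace uV; rewrite Em Ek in hi.
have hmk : (m <= k)%N.
  by move: hk hi; rewrite addn1 eq_sym leq_eqVlt ltnS => /negbTE ->.
have dsum : Xz ^+ m %| E [set: T] + (`|w [set u; v]| ^+ 2)%:P * E ([set: T] :\ u :\ v).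
  rewrite Rec1 subrK; apply: dvdp_mull; rewrite -mup_geq ?monic_neq0 // Ek' //.
have dV : Xz ^+ m %| E [set: T] by rewrite -mup_geq ?monic_neq0 // Em'.
rewrite dvdp_addr // mul_polyC dvdpZr // -mup_geq ?monic_neq0 // Ej' in dsum.
by move: hj; rewrite addn1 => hj; rewrite leqNgt hj in dsum.
Qed.
End Main.

Theorem lemma5p8 (R : rcfType) (T : finType) (g : rel T)
    (w : {set T} -> R[i]) (w1 : T -> R) (theta : R) (u : T) :
  simple_graph g ->
  (forall e : {set T}, is_edge g e -> w e != 0%R) ->
  special g w w1 theta [set: T] u ->
  (2 <= degree g u)%N.
Proof. by case=> gsym girr hw; apply: main. Qed.
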